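(* Let $D\colon\mathbf{I}\to\mathbf{CompOrd}$ be a codirected diagram, let $(f_i\colon X\to D(i))_{i\in\mathbf{I}}$ be a limit cone for $D$ in $\mathbf{CompOrd}$, and let $K,L$ be closed subsets of $X$. Then: (1) $\uparrow K\subseteq\uparrow L$ iff $\uparrow f_i[K]\subseteq\uparrow f_i[L]$ for all $i\in\mathbf{I}$; (2) $\downarrow K\subseteq\downarrow L$ iff $\downarrow f_i[K]\subseteq\downarrow f_i[L]$ for all $i\in\mathbf{I}$; (3) $\updownarrow K\le_{\mathrm{EM}}\updownarrow L$ iff $\updownarrow f_i[K]\le_{\mathrm{EM}}\updownarrow f_i[L]$ for all $i\in\mathbf{I}$.
   Context: $\mathbf{CompOrd}$ is the category of compact ordered spaces (compact Hausdorff spaces with a partial order closed in $X\times X$) and continuous order-preserving maps. For a subset $Y$ of a poset, $\uparrow Y$, $\downarrow Y$ denote up- and down-closure and $\updownarrow Y=\uparrow Y\cap\downarrow Y$. For subsets $K,L$ of a poset, the Egli–Milner order is $K\le_{\mathrm{EM}}L$ iff $\uparrow L\subseteq\uparrow K$ and $\downarrow K\subseteq\downarrow L$. A codirected diagram is a diagram indexed by a small cofiltered preorder. *)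

(* Defs.v *)
From HB Require Import structures.
From mathcomp Require Import all_boot all_order.
From mathcomp Require Import all_classical all_reals topology.
Set Implicit Arguments. Unset Strict Implicit. Unset Printing Implicit Defensive.
Local Open Scope classical_set_scope.

Definition is_compord (X : topologicalType) (le : X -> X -> Prop) : Prop :=
  [/\ hausdorff_space X, compact [set: X],
      (forall x, le x x) /\
      (forall x y, le x y -> le y x -> x = y),
      (forall x y z, le x y -> le y z -> le x z)
    & closed ([set p | le p.1 p.2] : set (X * X))].

Definition is_compord_map (X Y : topologicalType)
  (leX : X -> X -> Prop) (leY : Y -> Y -> Prop) (f : X -> Y) : Prop :=
  continuous f /\ (forall x y, leX x y -> leY (f x) (f y)).

Definition upc (T : Type) (le : T -> T -> Prop) (A : set T) : set T :=
  [set y | exists2 x, A x & le x y].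
Definition downc (T : Type) (le : T -> T -> Prop) (A : set T) : set T :=
  [set y | exists2 x, A x & le y x].
Definition updownc (T : Type) (le : T -> T -> Prop) (A : set T) : set T :=
  upc le A `&` downc le A.
Definition EM_le (T : Type) (le : T -> T -> Prop) (K L : set T) : Prop :=
  upc le L `<=` upc le K /\ downc le K `<=` downc le L.

(* A small cofiltered preorder I (an arrow i -> j exists iff rI i j). *)
Definition cofiltered_preorder (I : Type) (rI : I -> I -> Prop) : Prop :=
  [/\ (forall i, rI i i),
      (forall i j k, rI i j -> rI j k -> rI i k),
      (exists i : I, True)
    & (forall i j, exists k, rI k i /\ rI k j)].

Definition is_compord_diagram (I : Type) (rI : I -> I -> Prop)
  (D : I -> topologicalType) (leD : forall i, D i -> D i -> Prop)
  (dmap : forall i j, rI i j -> D i -> D j) : Prop :=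
  [/\ (forall i, is_compord (leD i)),
      (forall i j (p : rI i j), is_compord_map (leD i) (leD j) (dmap i j p)),
      (forall i (p : rI i i) x, dmap i i p x = x)
    & (forall i j k (p : rI i j) (q : rI j k) (r : rI i k) x,
         dmap i k r x = dmap j k q (dmap i j p x))].

Definition is_compord_cone (I : Type) (rI : I -> I -> Prop)
  (D : I -> topologicalType) (leD : forall i, D i -> D i -> Prop)
  (dmap : forall i j, rI i j -> D i -> D j)
  (Y : topologicalType) (leY : Y -> Y -> Prop) (g : forall i, Y -> D i) : Prop :=
  [/\ is_compord leY,
      (forall i, is_compord_map leY (leD i) (g i))
    & (forall i j (p : rI i j) y, dmap i j p (g i y) = g j y)].

Definition is_compord_limit (I : Type) (rI : I -> I -> Prop)
  (D : I -> topologicalType) (leD : forall i, D i -> D i -> Prop)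
  (dmap : forall i j, rI i j -> D i -> D j)
  (X : topologicalType) (leX : X -> X -> Prop) (f : forall i, X -> D i) : Prop :=
  is_compord_cone leD dmap leX f /\
  (forall (Y : topologicalType) (leY : Y -> Y -> Prop) (g : forall i, Y -> D i),
     is_compord_cone leD dmap leY g ->
     exists h : Y -> X,
       [/\ is_compord_map leY leX h,
           (forall i y, f i (h y) = g i y)
         & (forall h' : Y -> X, is_compord_map leY leX h' ->
              (forall i y, f i (h' y) = g i y) -> h' = h)]).

(* Main.v *)
Require Import Defs.
From HB Require Import structures.
From mathcomp Require Import all_boot all_order.
From mathcomp Require Import all_classical all_reals topology.
Local Open Scope classical_set_scope.

Lemma bool_cont (Z : topologicalType) (g : bool -> Z) : continuous g.
Proof.
move=> x B /= gB;
have h1 : nbhs x [set x] := discrete_set1 x.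
apply: (filterS _ h1) => y /= ->; exact: nbhs_singleton.
Qed.

Lemma bool_compord (le : bool -> bool -> Prop) :
  (forall x, le x x) -> (forall x y, le x y -> le y x -> x = y) ->
  (forall x y z, le x y -> le y z -> le x z) -> is_compord le.
Proof.
move=> r a t; split => //.
- move=> p q cl; have := cl [set p] [set q] (discrete_set1 p) (discrete_set1 q).
  by case=> z [/= -> ->].
- by apply: finite_compact; exact: finite_finset.
- move=> p cp; have [z [Sz /= zp]] : [set p | le p.1 p.2] `&` [set p] !=set0.
    apply: cp; exists ([set p.1], [set p.2]); first by split; exact: discrete_set1.
    by case=> a1 b1 /= [-> ->]; case: p.
  by rewrite -zp.
Qed.

Section Lim.
Variables (I : Type) (rI : I -> I -> Prop)
  (D : I -> topologicalType) (leD : forall i, D i -> D i -> Prop)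
  (dmap : forall i j, rI i j -> D i -> D j)
  (X : topologicalType) (leX : X -> X -> Prop) (f : forall i, X -> D i).
Hypothesis hD : is_compord_diagram leD dmap.
Hypothesis hL : is_compord_limit leD dmap leX f.

Lemma leD_refl i x : leD i x x.
Proof. by case: hD => /(_ i) [_ _ [r _] _ _] _ _ _; apply: r. Qed.

Lemma leX_refl x : leX x x.
Proof. by case: hL => -[[_ _ [r _] _ _] _ _] _; apply: r. Qed.

Lemma lim_inj a b : (forall i, f i a = f i b) -> a = b.
Proof.
move=> fab; case: hL => -[cX fmap fcom] univ.
have [|h [_ _ hu]] := univ bool (@eq bool) (fun i (_ : bool) => f i a).
  split.
  - by apply: bool_compord => // x y z -> ->.
  - move=> i; split; first exact: bool_cont.
    by move=> x y _; exact: leD_refl.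
  - by move=> i j p y; exact: fcom.
have e1 := hu (fun _ => a); have e2 := hu (fun _ => b).
have m : forall c : X, is_compord_map (@eq bool) leX (fun _ => c).
  by move=> c; split; [move=> x; exact: cvg_cst | move=> x y _; exact: leX_refl].
have := e1 (m a) (fun i y => erefl); have := e2 (m b) (fun i y => esym (fab i)).
by move=> E2 E1; have := congr1 (fun g => g true) (etrans E1 (esym E2)).
Qed.

Lemma lim_reflect a b : (forall i, leD i (f i a) (f i b)) -> leX a b.
Proof.
move=> fab; case: hL => -[cX fmap fcom] univ.
have [|h [[_ hm] hf _]] := univ bool (fun x y : bool => x ==> y)
   (fun i (t : bool) => if t then f i b else f i a).
  split.
  - apply: bool_compord.
    + by case.
    + by case; case.
    + by case; case; case.
  - move=> i; split; first exact: bool_cont.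
    by case; case => //= _; [exact: leD_refl | exact: leD_refl].
  - by move=> i j p [] /=; exact: fcom.
have -> : a = h false by apply: lim_inj => i; rewrite hf.
have -> : b = h true by apply: lim_inj => i; rewrite hf.
by apply: hm.
Qed.
End Lim.

Lemma up_main (I : Type) (rI : I -> I -> Prop)
  (D : I -> topologicalType) (leD : forall i, D i -> D i -> Prop)
  (dmap : forall i j, rI i j -> D i -> D j)
  (X : topologicalType) (leX : X -> X -> Prop) (f : forall i, X -> D i)
  (K L : set X) :
  cofiltered_preorder rI ->
  (forall i x y z, leD i x y -> leD i y z -> leD i x z) ->
  (forall i j (p : rI i j) x y, leD i x y -> leD j (dmap i j p x) (dmap i j p y)) ->
  (forall i j (p : rI i j) y, dmap i j p (f i y) = f j y) ->
  (forall x, leX x x) ->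
  (forall i x y, leX x y -> leD i (f i x) (f i y)) ->
  (forall a b, (forall i, leD i (f i a) (f i b)) -> leX a b) ->
  compact [set: X] ->
  (forall i c, closed [set y | leD i (f i y) c]) ->
  closed L ->
  (upc leX K `<=` upc leX L <->
     forall i, upc (leD i) (f i @` K) `<=` upc (leD i) (f i @` L)).
Proof.
move=> [_ _ [i0 _] codir] tr dm dcom rX fm frefl cX cl clL; split.
  move=> KL i z [_ [k Kk <-] kz].
  have [l Ll lk] := KL k (ex_intro2 _ _ k Kk (rX k)).
  by exists (f i l); [exists l | apply: tr (fm _ _ _ lk) kz].
move=> H x [k Kk kx].
pose B i := L `&` [set y | leD i (f i y) (f i x)].
have Bmono : forall k i (p : rI k i), B k `<=` B i.
  by move=> k' i p y [Ly le]; split => //=; rewrite -!(dcom _ _ p); exact: dm.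
have FF : Filter (filter_from setT B).
  apply: filter_fromT_filter; first by exists i0.
  move=> i j; have [k' [pi pj]] := codir i j.
  by exists k' => y By; split; [exact: Bmono pi _ By | exact: Bmono pj _ By].
have PF : ProperFilter (filter_from setT B).
  apply: filter_from_proper => i _.
  have [_ [l Ll <-] le] := H i (f i x) (ex_intro2 _ _ (f i k) (ex_intro2 _ _ k Kk erefl) (fm _ _ _ kx)).
  by exists l.
have [|z [_ cz]] := cX _ PF; first by exists i0.
have zB : forall i, B i z.
  move=> i; have clB : closed (B i) by apply: closedI => //; exact: cl.
  apply: clB => C nC; apply: cz => //; by exists i.
exists z; first by have [] := zB i0.
by apply: frefl => i; have [] := zB i.
Qed.

Lemma upc_ud (T : Type) (le : T -> T -> Prop) (A : set T) :
  (forall x, le x x) -> (forall x y z, le x y -> le y z -> le x z) ->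
  upc le (updownc le A) = upc le A.
Proof.
move=> r t; apply/seteqP; split => y.
  by move=> [x [[a Aa ax] _] xy]; exists a => //; exact: t ax xy.
by move=> [x Ax xy]; exists x => //; split; exists x.
Qed.

Lemma downc_ud (T : Type) (le : T -> T -> Prop) (A : set T) :
  (forall x, le x x) -> (forall x y z, le x y -> le y z -> le x z) ->
  downc le (updownc le A) = downc le A.
Proof.
move=> r t; apply/seteqP; split => y.
  by move=> [x [_ [a Aa ax]] xy]; exists a => //; exact: t xy ax.
by move=> [x Ax xy]; exists x => //; split; exists x.
Qed.

Lemma closed_sec (T : topologicalType) (le : T -> T -> Prop) (c : T) :
  closed ([set p | le p.1 p.2] : set (T * T)) ->
  closed [set d | le d c] /\ closed [set d | le c d].
Proof.
move=> cl; split.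
  have -> : [set d | le d c] = (fun d => (d, c)) @^-1` [set p | le p.1 p.2] by [].
  apply: preimage_closed => // x _; apply: cvg_pair; [exact: cvg_id | exact: cvg_cst].
have -> : [set d | le c d] = (fun d => (c, d)) @^-1` [set p | le p.1 p.2] by [].
apply: preimage_closed => // x _; apply: cvg_pair; [exact: cvg_cst | exact: cvg_id].
Qed.

Theorem lemma3p11 (I : Type) (rI : I -> I -> Prop)
  (D : I -> topologicalType) (leD : forall i, D i -> D i -> Prop)
  (dmap : forall i j, rI i j -> D i -> D j)
  (X : topologicalType) (leX : X -> X -> Prop) (f : forall i, X -> D i)
  (K L : set X) :
  cofiltered_preorder rI ->
  is_compord_diagram leD dmap ->
  is_compord_limit leD dmap leX f ->
  closed K -> closed L ->
  [/\ (upc leX K `<=` upc leX L <->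
         forall i, upc (leD i) (f i @` K) `<=` upc (leD i) (f i @` L)),
      (downc leX K `<=` downc leX L <->
         forall i, downc (leD i) (f i @` K) `<=` downc (leD i) (f i @` L))
    & (EM_le leX (updownc leX K) (updownc leX L) <->
         forall i, EM_le (leD i) (updownc (leD i) (f i @` K))
                              (updownc (leD i) (f i @` L)))].
Proof.
move=> hI hD hL clK clL.
have frefl := @lim_reflect I rI D leD dmap X leX f hD hL.
have [[cX fmap fcom] _] := hL.
have [_ comX [rX _] trX _] := cX.
have [cD dmapm _ _] := hD.
have rD : forall i x, leD i x x by move=> i; have [_ _ [r _] _ _] := cD i.
have trD : forall i x y z, leD i x y -> leD i y z -> leD i x z.
  by move=> i; have [_ _ _ t _] := cD i.
have dm : forall i j (p : rI i j) x y, leD i x y -> leD j (dmap i j p x) (dmap i j p y).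
  by move=> i j p; have [] := dmapm i j p.
have fm : forall i x y, leX x y -> leD i (f i x) (f i y).
  by move=> i; have [] := fmap i.
have fc : forall i, continuous (f i) by move=> i; have [] := fmap i.
have clsec : forall i c, closed [set d | leD i d c] /\ closed [set d | leD i c d].
  by move=> i c; have [_ _ _ _ ] := cD i; exact: closed_sec.
have cl1 : forall i c, closed [set y | leD i (f i y) c].
  move=> i c; apply: (@preimage_closed _ _ (f i) [set d | leD i d c]).
    by move=> x _; exact: fc.
  by have [] := clsec i c.
have cl2 : forall i c, closed [set y | leD i c (f i y)].
  move=> i c; apply: (@preimage_closed _ _ (f i) [set d | leD i c d]).
    by move=> x _; exact: fc.
  by have [] := clsec i c.
have up : forall K L : set X, closed L -> (upc leX K `<=` upc leX L <->
     forall i, upc (leD i) (f i @` K) `<=` upc (leD i) (f i @` L)).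
  move=> K' L' clL'; exact: (@up_main I rI D leD dmap X leX f K' L' hI).
have down : forall K L : set X, closed L -> (downc leX K `<=` downc leX L <->
     forall i, downc (leD i) (f i @` K) `<=` downc (leD i) (f i @` L)).
  move=> K' L' clL'.
  apply: (@up_main I rI D (fun i x y => leD i y x) dmap X (fun x y => leX y x) f K' L' hI) => //.
  - by move=> i x y z a b; exact: trD b a.
  - by move=> i j p x y; exact: dm.
  - by move=> i x y; exact: fm.
  - by move=> a b h; exact: frefl.
split; [exact: up | exact: down |].
rewrite /EM_le (upc_ud _ _ L rX trX) (upc_ud _ _ K rX trX) (downc_ud _ _ L rX trX) (downc_ud _ _ K rX trX).
split.
  move=> [h1 h2] i; rewrite !(upc_ud _ _ _ (rD i) (trD i)) !(downc_ud _ _ _ (rD i) (trD i)).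
  by split; [exact: (proj1 (up L K clK) h1) | exact: (proj1 (down K L clL) h2)].
move=> h; split.
  apply: (proj2 (up L K clK)) => i; have [] := h i.
  by rewrite !(upc_ud _ _ _ (rD i) (trD i)).
apply: (proj2 (down K L clL)) => i; have [] := h i.
by rewrite !(downc_ud _ _ _ (rD i) (trD i)).
Qed.
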